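(* Let $\mathbf{A}\in\mathbb{C}^{M\times N_a}$ and $\mathbf{B}\in\mathbb{C}^{M\times N_b}$ have unit-$\ell_2$-norm columns, with coherence parameters $\mu_a,\mu_b,\mu_m$. Let $\mathcal{E}\subseteq\{1,\dots,N_b\}$ with $|\mathcal{E}|=n_e$ and $1-\mu_b(n_e-1)>0$, let $\mathbf{R}_{\mathcal{E}}=\mathbf{I}_M-\mathbf{B}_{\mathcal{E}}\mathbf{B}_{\mathcal{E}}^\dagger$ and $\widetilde{\mathbf{A}}=\mathbf{R}_{\mathcal{E}}\mathbf{A}$. For each integer $n_x\ge1$, let $\delta_{n_x}$ be the smallest number such that $(1-\delta_{n_x})\|\mathbf{x}\|_2^2\le\|\widetilde{\mathbf{A}}\mathbf{x}\|_2^2\le(1+\delta_{n_x})\|\mathbf{x}\|_2^2$ for all $\mathbf{x}\in\mathbb{C}^{N_a}$ with at most $n_x$ nonzero entries. Then $$\delta_{n_x}\le\mu_a(n_x-1)+\frac{n_xn_e\mu_m^2}{[1-\mu_b(n_e-1)]^+}.$$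
   Context: Coherence parameters: $\mu_a=\max_{k\ne\ell}|\mathbf{a}_k^H\mathbf{a}_\ell|$, $\mu_b=\max_{k\ne\ell}|\mathbf{b}_k^H\mathbf{b}_\ell|$, $\mu_m=\max_{k,\ell}|\mathbf{a}_k^H\mathbf{b}_\ell|$. $[x]^+=\max\{x,0\}$. $\mathbf{B}_{\mathcal{E}}$ is the submatrix of columns of $\mathbf{B}$ indexed by $\mathcal{E}$ and $\mathbf{M}^\dagger=(\mathbf{M}^H\mathbf{M})^{-1}\mathbf{M}^H$. *)

(* Defs.v *)
(* The complex field is modelled by an arbitrary
   numClosedFieldType C (e.g. algC); conjugation is Num.conj. *)
From HB Require Import structures.
From mathcomp Require Import all_boot all_order all_algebra.
Set Implicit Arguments. Unset Strict Implicit. Unset Printing Implicit Defensive.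
Import Order.TTheory GRing.Theory Num.Theory.
Local Open Scope ring_scope.

Section Defs.
Variable C : numClosedFieldType.

Definition adjmx m n (X : 'M[C]_(m, n)) : 'M[C]_(n, m) := (map_mx Num.conj X)^T.

Definition colip M na nb (A : 'M[C]_(M, na)) (B : 'M[C]_(M, nb))
  (k : 'I_na) (l : 'I_nb) : C :=
  \sum_(i < M) Num.conj (A i k) * B i l.

Definition sqnorm n (x : 'cV[C]_n) : C := \sum_(i < n) `|x i 0| ^+ 2.

Definition unit_cols M n (A : 'M[C]_(M, n)) : Prop :=
  forall k : 'I_n, sqnorm (col k A) = 1.

(* mu_a = max_{k <> l} |a_k^H a_l|  (max over empty set = 0) *)
Definition coh M n (A : 'M[C]_(M, n)) : C :=
  \big[Num.max/0]_(k < n) \big[Num.max/0]_(l < n | k != l) `|colip A A k l|.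

Definition mcoh M na nb (A : 'M[C]_(M, na)) (B : 'M[C]_(M, nb)) : C :=
  \big[Num.max/0]_(k < na) \big[Num.max/0]_(l < nb) `|colip A B k l|.

(* B_E : columns of B indexed by E (in increasing index order) *)
Definition subcols M nb (B : 'M[C]_(M, nb)) (E : {set 'I_nb}) : 'M[C]_(M, #|E|) :=
  colsub (fun j : 'I_#|E| => enum_val j) B.

(* Moore-Penrose pseudo-inverse for full column rank: (X^H X)^{-1} X^H *)
Definition pinv m n (X : 'M[C]_(m, n)) : 'M[C]_(n, m) :=
  invmx (adjmx X *m X) *m adjmx X.

Definition projE M nb (B : 'M[C]_(M, nb)) (E : {set 'I_nb}) : 'M[C]_M :=
  1%:M - subcols B E *m pinv (subcols B E).

Definition nnz n (x : 'cV[C]_n) : nat := #|[set i | x i 0 != 0]|.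

Definition rip M n (X : 'M[C]_(M, n)) (s : nat) (d : C) : Prop :=
  forall x : 'cV[C]_n, (nnz x <= s)%N ->
    (1 - d) * sqnorm x <= sqnorm (X *m x) <= (1 + d) * sqnorm x.

Definition is_ric M n (X : 'M[C]_(M, n)) (s : nat) (d : C) : Prop :=
  d \is Num.real /\ rip X s d /\
  forall d', d' \is Num.real -> rip X s d' -> d <= d'.

Definition pospart (x : C) : C := Num.max x 0.
End Defs.

(* Main.v *)
Require Import Defs.
From HB Require Import structures.
From mathcomp Require Import all_boot all_order all_algebra.
From mathcomp Require Import ring.
Import Order.TTheory GRing.Theory Num.Theory.
Local Open Scope ring_scope.

Section Helpers.
Variable C : numClosedFieldType.

Lemma adjmxM m n p (X : 'M[C]_(m, n)) (Y : 'M[C]_(n, p)) :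
  adjmx (X *m Y) = adjmx Y *m adjmx X.
Proof. by rewrite /adjmx map_mxM trmx_mul. Qed.

Lemma adjmxK m n (X : 'M[C]_(m, n)) : adjmx (adjmx X) = X.
Proof.
by apply/matrixP => i j; rewrite /adjmx !mxE conjCK.
Qed.

Lemma adjmxB m n (X Y : 'M[C]_(m, n)) : adjmx (X - Y) = adjmx X - adjmx Y.
Proof. by apply/matrixP => i j; rewrite /adjmx !mxE rmorphB. Qed.

Lemma adjmx1 n : adjmx (1%:M : 'M[C]_n) = 1%:M.
Proof.
apply/matrixP => i j; rewrite /adjmx !mxE rmorph_nat eq_sym.
done.
Qed.

Lemma adjmx_inv n (X : 'M[C]_n) : adjmx (invmx X) = invmx (adjmx X).
Proof. by rewrite /adjmx map_invmx trmx_inv. Qed.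

Lemma sqnormE n (v : 'cV[C]_n) : sqnorm v = \sum_i (v i 0)^* * v i 0.
Proof. by apply: eq_bigr => i _; rewrite normCK mulrC. Qed.

Lemma sqnormM n (v : 'cV[C]_n) : sqnorm v = (adjmx v *m v) 0 0.
Proof. by rewrite sqnormE mxE; apply: eq_bigr => i _; rewrite !mxE. Qed.

Lemma sqnorm_ge0 n (v : 'cV[C]_n) : 0 <= sqnorm v.
Proof. by apply: sumr_ge0 => i _; rewrite exprn_ge0. Qed.

Lemma quadE n (u v : 'cV[C]_n) (G : 'M[C]_n) :
  (adjmx u *m G *m v) 0 0 = \sum_k \sum_l (u k 0)^* * G k l * v l 0.
Proof.
rewrite mxE exchange_big /=; apply: eq_bigr => l _.
rewrite mxE big_distrl /=; apply: eq_bigr => k _.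
by rewrite !mxE.
Qed.

Lemma gramE M n (X : 'M[C]_(M, n)) k l : (adjmx X *m X) k l = colip X X k l.
Proof. by rewrite mxE; apply: eq_bigr => i _; rewrite !mxE. Qed.

Lemma maxP (x y : C) : 0 <= x -> 0 <= y ->
  [/\ x <= Num.max x y, y <= Num.max x y & 0 <= Num.max x y].
Proof.
move=> hx hy; rewrite /Num.max /Order.max /=.
case: ifP => hxy; first by split => //; exact: ltW.
split => //; rewrite real_leNgt ?hxy //; exact: ger0_real.
Qed.

Lemma bigmaxP (I : eqType) (r : seq I) (P : pred I) (F : I -> C) :
  (forall i, P i -> 0 <= F i) ->
  0 <= \big[Num.max/0]_(i <- r | P i) F i /\
  forall i, i \in r -> P i -> F i <= \big[Num.max/0]_(i <- r | P i) F i.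
Proof.
move=> hF; elim: r => [|a r [IH1 IH2]]; first by rewrite big_nil.
rewrite big_cons; case: ifP => Pa.
  have [h1 h2 h3] := maxP _ _ (hF a Pa) IH1.
  split => // i; rewrite inE => /orP [/eqP -> _ //|ir Pi].
  exact: le_trans (IH2 i ir Pi) h2.
split => // i; rewrite inE => /orP [/eqP -> |]; first by rewrite Pa.
exact: IH2.
Qed.


Lemma cs_sum n (a : 'I_n -> C) (T : {set 'I_n}) : (forall k, 0 <= a k) ->
  (\sum_(k in T) a k)^+2 <= #|T|%:R * \sum_(k in T) a k ^+ 2.
Proof.
move=> ha.
have e1 : forall k, \sum_(l in T) (a k ^+2 + a l ^+2 - 2 * (a k * a l))
   = a k ^+ 2 * #|T|%:R + \sum_(l in T) a l ^+ 2 - 2 * a k * \sum_(l in T) a l.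
  move=> k; rewrite sumrB big_split /= sumr_const; congr (_ + _ - _).
    by rewrite mulr_natr.
  by rewrite mulr_sumr; apply: eq_bigr => l _; ring.
have H : \sum_(k in T) \sum_(l in T) (a k - a l)^+2
   = 2 * (#|T|%:R * \sum_(k in T) a k ^+ 2 - (\sum_(k in T) a k)^+2).
  transitivity (\sum_(k in T) \sum_(l in T) (a k ^+2 + a l ^+2 - 2 * (a k * a l))).
    by apply: eq_bigr => k _; apply: eq_bigr => l _; ring.
  rewrite (eq_bigr _ (fun k _ => e1 k)) sumrB big_split /= sumr_const.
  rewrite -mulr_suml -mulr_suml -[(\sum_(l in T) a l ^+ 2) *+ #|T|]mulr_natr.
  rewrite -mulr_sumr; ring.
have H0 : 0 <= \sum_(k in T) \sum_(l in T) (a k - a l)^+2.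
  apply: sumr_ge0 => k _; apply: sumr_ge0 => l _.
  by rewrite -real_normK ?exprn_ge0 // rpredB // ger0_real.
by move: H0; rewrite H pmulr_rge0 // subr_ge0.
Qed.

Lemma cs_supp n (a : 'I_n -> C) (T : {set 'I_n}) s : (forall k, 0 <= a k) ->
  (forall k, k \notin T -> a k = 0) -> (#|T| <= s)%N ->
  (\sum_k a k)^+2 <= s%:R * \sum_k a k ^+ 2.
Proof.
move=> ha hT hs.
have e1 : \sum_k a k = \sum_(k in T) a k.
  rewrite (bigID (mem T)) /= [X in _ + X]big1 ?addr0 //.
have e2 : \sum_k a k ^+ 2 = \sum_(k in T) a k ^+ 2.
  rewrite (bigID (mem T)) /= [X in _ + X]big1 ?addr0 //.
  by move=> k hk; rewrite hT // expr0n.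
rewrite e1 e2.
apply: le_trans (@cs_sum _ a T ha) _; apply: ler_wpM2r.
  by apply: sumr_ge0 => k _; rewrite exprn_ge0.
by rewrite ler_nat.
Qed.

Lemma gersh M n (X : 'M[C]_(M,n)) (mu : C) (w : 'cV[C]_n) s :
  0 <= mu -> (forall k, colip X X k k = 1) ->
  (forall k l, k != l -> `|colip X X k l| <= mu) -> (nnz w <= s)%N ->
  `|sqnorm (X *m w) - sqnorm w| <= mu * (s%:R - 1) * sqnorm w.
Proof.
move=> hmu hdiag hoff hs.
have eX : sqnorm (X *m w) = \sum_k \sum_l (w k 0)^* * colip X X k l * w l 0.
  rewrite sqnormM adjmxM mulmxA -(mulmxA (adjmx w)) quadE.
  by apply: eq_bigr => k _; apply: eq_bigr => l _; rewrite gramE.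
have eD : sqnorm (X *m w) - sqnorm w
    = \sum_k \sum_(l | l != k) (w k 0)^* * colip X X k l * w l 0.
  rewrite eX sqnormE -sumrB; apply: eq_bigr => k _.
  by rewrite (bigD1 k) //= hdiag mulr1 addrAC subrr add0r.
rewrite eD; apply: le_trans (ler_norm_sum _ _ _) _.
apply: (@le_trans _ _ (\sum_k \sum_(l | l != k) `|w k 0| * mu * `|w l 0|)).
  apply: ler_sum => k _; apply: le_trans (ler_norm_sum _ _ _) _.
  apply: ler_sum => l hl; rewrite !normrM norm_conjC.
  apply: ler_wpM2r; first exact: normr_ge0.
  by apply: ler_wpM2l; [exact: normr_ge0 | apply: hoff; rewrite eq_sym].
have eS : forall k, \sum_l `|w l 0| = `|w k 0| + \sum_(l | l != k) `|w l 0|.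
  by move=> k; rewrite (bigD1 k).
have -> : \sum_k \sum_(l | l != k) `|w k 0| * mu * `|w l 0|
    = mu * ((\sum_l `|w l 0|)^+2 - sqnorm w).
  transitivity (\sum_k mu * (`|w k 0| * \sum_l `|w l 0| - `|w k 0|^+2)).
    apply: eq_bigr => k _; rewrite (eS k).
    transitivity (mu * `|w k 0| * \sum_(l | l != k) `|w l 0|); last by ring.
    by rewrite mulr_sumr; apply: eq_bigr => l _; ring.
  by rewrite -mulr_sumr sumrB -mulr_suml expr2.
rewrite -mulrA; apply: ler_wpM2l => //; rewrite mulrBl mul1r; apply: lerB => //.
apply: (@cs_supp _ (fun k => `|w k 0|) [set i | w i 0 != 0] s) => //.
by move=> k; rewrite inE negbK => /eqP ->; rewrite normr0.
Qed.


Lemma ipE M n p (X : 'M[C]_(M, n)) (Y : 'M[C]_(M, p)) k l :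
  (adjmx X *m Y) k l = colip X Y k l.
Proof. by rewrite mxE; apply: eq_bigr => i _; rewrite !mxE. Qed.

Lemma colip_sym M n p (X : 'M[C]_(M, n)) (Y : 'M[C]_(M, p)) k l :
  colip X Y k l = (colip Y X l k)^*.
Proof.
rewrite /colip rmorph_sum; apply: eq_bigr => i _.
by rewrite rmorphM /= conjCK mulrC.
Qed.

Lemma colip_diag M n (X : 'M[C]_(M, n)) k : colip X X k k = sqnorm (col k X).
Proof. by rewrite sqnormE; apply: eq_bigr => i _; rewrite !mxE. Qed.

Lemma colip_sub M n p (X : 'M[C]_(M, n)) (B : 'M[C]_(M, p)) (E : {set 'I_p}) k l :
  colip X (subcols B E) k l = colip X B k (enum_val l).
Proof. by apply: eq_bigr => i _; rewrite !mxE. Qed.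

Lemma colip_sub2 M p (B : 'M[C]_(M, p)) (E : {set 'I_p}) k l :
  colip (subcols B E) (subcols B E) k l = colip B B (enum_val k) (enum_val l).
Proof. by apply: eq_bigr => i _; rewrite !mxE. Qed.

Lemma coh_in M n (X : 'M[C]_(M, n)) k :
  0 <= \big[Num.max/0]_(l < n | k != l) `|colip X X k l|.
Proof.
have h := (@bigmaxP _ (index_enum 'I_n) (fun l => k != l)
  (fun l => `|colip X X k l|) (fun _ _ => normr_ge0 _)); exact h.1.
Qed.

Lemma coh_ge0 M n (X : 'M[C]_(M, n)) : 0 <= coh X.
Proof.
have h := (@bigmaxP _ (index_enum 'I_n) (fun _ => true) _ (fun k _ => @coh_in _ _ X k)).
exact h.1.
Qed.

Lemma coh_le M n (X : 'M[C]_(M, n)) k l : k != l -> `|colip X X k l| <= coh X.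
Proof.
move=> hkl.
have h1 := (@bigmaxP _ (index_enum 'I_n) (fun l => k != l)
  (fun l => `|colip X X k l|) (fun _ _ => normr_ge0 _)).
have h2 := (@bigmaxP _ (index_enum 'I_n) (fun _ => true) _ (fun k _ => @coh_in _ _ X k)).
exact (le_trans (h1.2 l (mem_index_enum l) hkl) (h2.2 k (mem_index_enum k) isT)).
Qed.

Lemma mcoh_in M n p (X : 'M[C]_(M, n)) (Y : 'M[C]_(M, p)) k :
  0 <= \big[Num.max/0]_(l < p) `|colip X Y k l|.
Proof.
have h := (@bigmaxP _ (index_enum 'I_p) (fun _ => true)
  (fun l => `|colip X Y k l|) (fun _ _ => normr_ge0 _)); exact h.1.
Qed.

Lemma mcoh_ge0 M n p (X : 'M[C]_(M, n)) (Y : 'M[C]_(M, p)) : 0 <= mcoh X Y.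
Proof.
have h := (@bigmaxP _ (index_enum 'I_n) (fun _ => true) _ (fun k _ => @mcoh_in _ _ _ X Y k)).
exact h.1.
Qed.

Lemma mcoh_le M n p (X : 'M[C]_(M, n)) (Y : 'M[C]_(M, p)) k l :
  `|colip X Y k l| <= mcoh X Y.
Proof.
have h1 := (@bigmaxP _ (index_enum 'I_p) (fun _ => true)
  (fun l => `|colip X Y k l|) (fun _ _ => normr_ge0 _)).
have h2 := (@bigmaxP _ (index_enum 'I_n) (fun _ => true) _ (fun k _ => @mcoh_in _ _ _ X Y k)).
exact (le_trans (h1.2 l (mem_index_enum l) isT) (h2.2 k (mem_index_enum k) isT)).
Qed.

Lemma subE m n (X Y : 'M[C]_(m, n)) i j : (X - Y) i j = X i j - Y i j.
Proof. by rewrite !mxE. Qed.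

Lemma amgm (a b c : C) : 0 <= a -> 0 <= b -> 0 < c ->
  a * b <= (c * a ^+ 2 + b ^+ 2 / c) / 2.
Proof.
move=> ha hb hc; rewrite -subr_ge0.
have -> : (c * a ^+ 2 + b ^+ 2 / c) / 2 - a * b = (c * a - b) ^+ 2 / (2 * c).
  by field; rewrite lt0r_neq0 //= ?pnatr_eq0.
apply: divr_ge0; last by rewrite pmulr_rge0 // ltW.
by rewrite -real_normK ?exprn_ge0 // rpredB // ger0_real // mulr_ge0 // ltW.
Qed.


Lemma adjmx0 m n : adjmx (0 : 'M[C]_(m, n)) = 0.
Proof. by apply/matrixP => i j; rewrite /adjmx !mxE rmorph0. Qed.

Lemma lowBE M Nb (B : 'M[C]_(M,Nb)) (E : {set 'I_Nb}) (w : 'cV[C]_#|E|) :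
  unit_cols B -> (1 - coh B * (#|E|%:R - 1)) * sqnorm w <= sqnorm (subcols B E *m w).
Proof.
move=> hB.
have hd : forall k, colip (subcols B E) (subcols B E) k k = 1.
  by move=> k; rewrite colip_sub2 colip_diag; exact: hB.
have ho : forall k l, k != l -> `|colip (subcols B E) (subcols B E) k l| <= coh B.
  move=> k l hkl; rewrite colip_sub2; apply: coh_le.
  by apply: contra hkl => /eqP /enum_val_inj ->.
have hn : (nnz w <= #|E|)%N.
  by rewrite /nnz; apply: leq_trans (max_card _) _; rewrite card_ord.
have h := @gersh M #|E| (subcols B E) (coh B) w #|E| (@coh_ge0 _ _ B) hd ho hn.
move: h; rewrite real_ler_norml ?rpredB ?ger0_real ?sqnorm_ge0 //.
case/andP => h1 _; rewrite mulrBl mul1r; move: h1; rewrite lerBrDr.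
by rewrite addrC.
Qed.

Lemma G_unit M Nb (B : 'M[C]_(M,Nb)) (E : {set 'I_Nb}) :
  unit_cols B -> 0 < 1 - coh B * (#|E|%:R - 1) ->
  (adjmx (subcols B E) *m subcols B E) \in unitmx.
Proof.
move=> hB hc; rewrite unitmxE unitfE; apply/negP => /det0P [v hv0 hv].
set BE := subcols B E.
have hw : (adjmx BE *m BE) *m adjmx v = 0.
  by move/(congr1 (@adjmx C 1 #|E|)): hv; rewrite adjmxM adjmxM adjmxK adjmx0.
have h0 : sqnorm (BE *m adjmx v) = 0.
  by rewrite sqnormM adjmxM -mulmxA (mulmxA (adjmx BE)) hw mulmx0 mxE.
have := @lowBE _ _ B E (adjmx v) hB; rewrite h0 pmulr_rle0 // => hle.
have hsq : sqnorm (adjmx v) = 0 by apply/eqP; rewrite eq_le hle sqnorm_ge0.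
apply: (negP hv0); apply/eqP/matrixP => i j; rewrite [RHS]mxE (ord1 i).
have : `|adjmx v j 0| ^+ 2 = 0.
  exact: (psumr_eq0P (fun i _ => exprn_ge0 2 (normr_ge0 _)) hsq).
rewrite !mxE norm_conjC => /eqP; rewrite expf_eq0 /= normr_eq0.
by move/eqP.
Qed.


Lemma main_rip M Na Nb (A : 'M[C]_(M, Na)) (B : 'M[C]_(M, Nb)) (E : {set 'I_Nb}) nx :
  unit_cols A -> unit_cols B -> 0 < 1 - coh B * (#|E|%:R - 1) ->
  rip (projE B E *m A) nx (coh A * (nx%:R - 1)
     + nx%:R * #|E|%:R * mcoh A B ^+ 2 / pospart (1 - coh B * (#|E|%:R - 1))).
Proof.
move=> hA hB hc x hx.
set c := 1 - coh B * (#|E|%:R - 1).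
have -> : pospart c = c.
  rewrite /pospart /Num.max /Order.max /=; case: ifP => // h.
  by move: (lt_trans hc h); rewrite ltxx.
set BE := subcols B E. set G := adjmx BE *m BE. set Gi := invmx G.
have hU : G \in unitmx := @G_unit M Nb B E hB hc.
set y := A *m x. set z := adjmx BE *m y. set w := Gi *m z.
set q := sqnorm (BE *m w).
have hGG : Gi *m G = 1%:M := mulVmx hU.
have hGG' : G *m Gi = 1%:M := mulmxV hU.
have hadjG : adjmx G = G by rewrite /G adjmxM adjmxK.
have hadjGi : adjmx Gi = Gi by rewrite /Gi adjmx_inv hadjG.
set P := BE *m Gi *m adjmx BE.
have hproj : projE B E = 1%:M - P by rewrite /projE /pinv /P mulmxA.
have hPadj : adjmx P = P by rewrite /P !adjmxM adjmxK hadjGi mulmxA.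
have hPP : P *m P = P.
  rewrite /P !mulmxA -(mulmxA (BE *m Gi) (adjmx BE) BE) -/G.
  by rewrite -(mulmxA BE Gi G) hGG mulmx1.
have hBw : BE *m w = P *m y by rewrite /w /z /P !mulmxA.
have hq : q = (adjmx y *m P *m y) 0 0.
  by rewrite /q hBw sqnormM adjmxM hPadj -mulmxA (mulmxA P P y) hPP mulmxA.
have hQ : (1%:M - P) *m (1%:M - P) = 1%:M - P.
  by rewrite mulmxBl mul1mx mulmxBr mulmx1 hPP subrr subr0.
have hI5 : sqnorm (projE B E *m y) = sqnorm y - q.
  rewrite hproj hq sqnormM adjmxM adjmxB adjmx1 hPadj.
  rewrite -mulmxA (mulmxA (1%:M - P)) hQ mulmxBl mul1mx mulmxBr subE.
  by rewrite mulmxA sqnormM.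
have hz : G *m w = z by rewrite /w mulmxA hGG' mul1mx.
have hqz : q = (adjmx w *m z) 0 0.
  by rewrite /q sqnormM adjmxM -mulmxA (mulmxA (adjmx BE) BE) -/G hz.
have hq0 : 0 <= q := sqnorm_ge0 _ _.
have hlow : c * sqnorm w <= q := @lowBE M Nb B E w hB.
have hqZ : q <= sqnorm z / c.
  have h1 : q <= (c * sqnorm w + sqnorm z / c) / 2.
    apply: le_trans (real_ler_norm (ger0_real hq0)) _.
    rewrite hqz mxE; apply: le_trans (ler_norm_sum _ _ _) _.
    apply: (@le_trans _ _ (\sum_k (c * `|w k 0| ^+ 2 + `|z k 0| ^+ 2 / c) / 2)).
      apply: ler_sum => k _; rewrite !mxE normrM norm_conjC.
      by apply: amgm => //; exact: normr_ge0.
    by rewrite -mulr_suml big_split /= -mulr_sumr -mulr_suml.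
  have h2 : (c * sqnorm w + sqnorm z / c) / 2 <= (q + sqnorm z / c) / 2.
    by rewrite ler_pM2r ?invr_gt0 ?ltr0n // lerD2r.
  have := le_trans h1 h2.
  by rewrite ler_pdivlMr ?ltr0n // mulr_natr mulr2n lerD2l.
have hzk : forall j, `|z j 0| <= mcoh A B * \sum_k `|x k 0|.
  move=> j; rewrite /z /y mulmxA mxE mulr_sumr.
  apply: le_trans (ler_norm_sum _ _ _) _; apply: ler_sum => k _.
  rewrite normrM ipE colip_sym colip_sub norm_conjC.
  by apply: ler_wpM2r; [exact: normr_ge0 | exact: mcoh_le].
have hS : (\sum_k `|x k 0|) ^+ 2 <= nx%:R * sqnorm x.
  apply: (@cs_supp _ (fun k => `|x k 0|) [set i | x i 0 != 0] nx) => //.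
  by move=> k; rewrite inE negbK => /eqP ->; rewrite normr0.
have hzb : sqnorm z <= #|E|%:R * mcoh A B ^+ 2 * (nx%:R * sqnorm x).
  apply: (@le_trans _ _ (\sum_(j < #|E|) mcoh A B ^+ 2 * (nx%:R * sqnorm x))).
    apply: ler_sum => j _.
    apply: (@le_trans _ _ ((mcoh A B * \sum_k `|x k 0|) ^+ 2)).
      by rewrite !expr2; apply: ler_pM => //; exact: normr_ge0.
    rewrite exprMn; apply: ler_wpM2l => //; exact: exprn_ge0 (@mcoh_ge0 _ _ _ A B).
  by rewrite sumr_const card_ord (mulr_natl _ #|E|) -mulrnAl.
have hd : forall k, colip A A k k = 1 by move=> k; rewrite colip_diag; exact: hA.
have ho : forall k l, k != l -> `|colip A A k l| <= coh A by move=> k l; exact: coh_le.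
have hY := @gersh M Na A (coh A) x nx (@coh_ge0 _ _ A) hd ho hx.
move: hY; rewrite real_ler_norml ?rpredB ?ger0_real ?sqnorm_ge0 // => /andP [hY1 hY2].
rewrite -mulmxA hI5.
set D := coh A * (nx%:R - 1) * sqnorm x.
set K := nx%:R * #|E|%:R * mcoh A B ^+ 2 / c.
have hK : 0 <= K.
  by rewrite /K divr_ge0 ?mulr_ge0 ?ler0n ?exprn_ge0 ?mcoh_ge0 // ltW.
apply/andP; split.
  have -> : (1 - (coh A * (nx%:R - 1) + K)) * sqnorm x = (sqnorm x - D) - K * sqnorm x.
    by rewrite /D; ring.
  apply: lerB.
    by move: hY1; rewrite lerBrDr addrC.
  apply: le_trans hqZ _.
  have -> : K * sqnorm x = (#|E|%:R * mcoh A B ^+ 2 * (nx%:R * sqnorm x)) / c.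
    by rewrite /K; ring.
  by apply: ler_wpM2r => //; rewrite invr_ge0 ltW.
have -> : (1 + (coh A * (nx%:R - 1) + K)) * sqnorm x = (sqnorm x + D) + K * sqnorm x.
  by rewrite /D; ring.
apply: (@le_trans _ _ (sqnorm y)); first by rewrite lerBlDr lerDl.
apply: ler_wpDr; first by rewrite mulr_ge0 ?sqnorm_ge0.
by move: hY2; rewrite lerBlDr addrC.
Qed.

End Helpers.

Theorem lemma1 (C : numClosedFieldType) (M Na Nb : nat)
  (A : 'M[C]_(M, Na)) (B : 'M[C]_(M, Nb)) (E : {set 'I_Nb}) (nx : nat) :
  unit_cols A -> unit_cols B ->
  0 < 1 - coh B * (#|E|%:R - 1) ->
  (1 <= nx)%N ->
  let At := projE B E *m A in
  let bound := coh A * (nx%:R - 1)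
               + nx%:R * #|E|%:R * mcoh A B ^+ 2 / pospart (1 - coh B * (#|E|%:R - 1)) in
  rip At nx bound /\ (forall d, is_ric At nx d -> d <= bound).
Proof.
move=> hA hB hc hnx At bound.
have hr : rip At nx bound := @main_rip C M Na Nb A B E nx hA hB hc.
split => // d [_ [_ hmin]]; apply: hmin => //.
have hc' : pospart (1 - coh B * (#|E|%:R - 1)) = 1 - coh B * (#|E|%:R - 1).
  rewrite /pospart /Num.max /Order.max /=; case: ifP => // h.
  by move: (lt_trans hc h); rewrite ltxx.
have rA := ger0_real (@coh_ge0 C _ _ A).
have rB := ger0_real (@coh_ge0 C _ _ B).
have rm := ger0_real (@mcoh_ge0 C _ _ _ A B).
rewrite /bound hc'.
by rewrite !(rpredD, rpredM, rpredV, rpredB, rpredX, realn, rpred1, rpredN).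
Qed.
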